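(* There is an absolute constant $c$ such that for every $N\ge1$ and every $\epsilon\in[0,1]$, every randomized XOR decision tree computing ${\rm MAJORITY}$ on $N$-bit inputs with zero-sided error $\epsilon$ has cost at least $\frac23N-\epsilon N-c\sqrt N$.
   Context: For $X=X_0X_1\cdots X_{N-1}\in\{0,1\}^N$, ${\rm MAJORITY}(X)=0$ if $X$ contains more zeros than ones and ${\rm MAJORITY}(X)=1$ otherwise. An XOR decision tree on $N$-bit inputs is a deterministic adaptive algorithm that on input $X$ makes a sequence of queries, each either a single bit $X_i$ or $X_i\oplus X_j$ ($0\le i,j\le N-1$), each chosen depending on previous answers, and then outputs a value. A randomized XOR decision tree is a probability distribution over XOR decision trees; its cost on input $X$ is the maximum number of queries made on $X$ over all trees in its support, and its cost is the maximum of this over all $X\in\{0,1\}^N$. It computes $f$ with zero-sided error $\epsilon$ if on every input $X$ it outputs $f(X)$ with probability at least $1-\epsilon$ and otherwise outputs ''I don't know'' (never an incorrect value). *)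

(* Defs.v *)
From HB Require Import structures.
From mathcomp Require Import all_boot all_order all_algebra.
From Stdlib Require Import Rdefinitions.
From mathcomp Require Import Rstruct.
Set Implicit Arguments. Unset Strict Implicit. Unset Printing Implicit Defensive.
Import Order.TTheory GRing.Theory Num.Theory.
Local Open Scope ring_scope.

Definition input (N : nat) := {ffun 'I_N -> bool}.

Definition majority (N : nat) (X : input N) : bool :=
  ~~ (ltn #|[set i | X i]| #|[set i | ~~ X i]|).

Inductive query (N : nat) : Type :=
| QBit of 'I_N
| QXor of 'I_N & 'I_N.

Definition eval_query (N : nat) (q : query N) (X : input N) : bool :=
  match q with
  | QBit i => X i
  | QXor i j => X i (+) X j
  end.

(* XOR decision tree; a leaf outputs Some b (the value b) or None ("I don't know") *)
Inductive xdt (N : nat) : Type :=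
| Leaf of option bool
| Node of query N & xdt N & xdt N.

Fixpoint run (N : nat) (t : xdt N) (X : input N) : option bool * nat :=
  match t with
  | Leaf o => (o, 0%N)
  | Node q t0 t1 =>
      let r := run (if eval_query q X then t1 else t0) X in (r.1, r.2.+1)
  end.

Definition output (N : nat) (t : xdt N) (X : input N) := (run t X).1.
Definition nqueries (N : nat) (t : xdt N) (X : input N) := (run t X).2.

(* A randomized XOR decision tree: a finitely supported probability
   distribution over XOR decision trees, given as a list of (tree, weight). *)
Definition is_distribution (N : nat) (D : seq (xdt N * R)) : Prop :=
  List.Forall (fun p => 0 <= p.2) D /\ \sum_(p <- D) p.2 = 1.

Definition posw (x : R) : bool := 0 < x.

Definition rcost (N : nat) (D : seq (xdt N * R)) : nat :=
  \max_(X : input N) \max_(p <- D | posw p.2) nqueries p.1 X.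

Definition zero_sided (N : nat) (f : input N -> bool) (D : seq (xdt N * R))
    (eps : R) : Prop :=
  forall X : input N,
    List.Forall (fun p => 0 < p.2 ->
       output p.1 X = Some (f X) \/ output p.1 X = None) D /\
    1 - eps <= \sum_(p <- D | output p.1 X == Some (f X)) p.2.

(* Main.v *)
Require Import Defs.
From mathcomp Require Import all_boot all_order all_algebra.
From Stdlib Require Import Rdefinitions.
From mathcomp Require Import Rstruct.
From mathcomp Require Import ring lra zify.
Set Implicit Arguments. Unset Strict Implicit. Unset Printing Implicit Defensive.
Import Order.TTheory GRing.Theory Num.Theory.
Local Open Scope ring_scope.

Definition lbl (N : nat) := 'I_N -> option 'I_N.

Definition hq {N} (lab : lbl N) (q : query N) (o : option 'I_N) : option 'I_N :=
  match q with
  | QBit a => if o == lab a then None else o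
  | QXor a b => if lab b == None then (if o == lab a then None else o)
                else if o == lab b then lab a else o
  end.

Definition upd {N} (lab : lbl N) (q : query N) : lbl N := fun u => hq lab q (lab u).

Fixpoint labf {N} (t : xdt N) (lab : lbl N) (X : input N) : lbl N :=
  match t with
  | Leaf _ => lab
  | Node q t0 t1 => labf (if eval_query q X then t1 else t0) (upd lab q) X
  end.

Definition flipg {N} (L : lbl N) (g : option 'I_N -> bool) (X : input N) : input N :=
  [ffun u => X u (+) g (L u)].

Definition coarse {N} (lab L : lbl N) :=
  (forall u v, lab u = lab v -> L u = L v) /\ (forall u, lab u = None -> L u = None).

Lemma hq_None N (lab : lbl N) q : hq lab q None = None.
Proof. case: q => [a|a b] /=; first by case: ifP.
case: ifP => [_|/eqP hb]; first by case: ifP.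
by case: ifP => // /eqP/esym.
Qed.

Lemma coarse_refl N (lab : lbl N) : coarse lab lab.
Proof. by split. Qed.

Lemma coarse_trans N (l1 l2 l3 : lbl N) : coarse l1 l2 -> coarse l2 l3 -> coarse l1 l3.
Proof. move=> [h1 h2] [h3 h4]; split; auto. Qed.

Lemma coarse_upd N (lab : lbl N) q : coarse lab (upd lab q).
Proof. split; rewrite /upd; first by move=> u v ->. by move=> u ->; rewrite hq_None. Qed.

Lemma coarse_labf N (t : xdt N) lab X : coarse lab (labf t lab X).
Proof.
elim: t lab => [o|q t0 IH0 t1 IH1] lab /=; first exact: coarse_refl.
apply: coarse_trans (coarse_upd lab q) _; case: eval_query; [exact: IH1 | exact: IH0].
Qed.

Lemma upd_query N (lab : lbl N) q :
  match q with QBit a => upd lab q a = None | QXor a b => upd lab q a = upd lab q b end.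
Proof.
rewrite /upd; case: q => [a|a b] /=; first by rewrite eqxx.
case: ifP => [/eqP ->|hb]; first by rewrite eqxx; case: ifP.
by rewrite eqxx; case: ifP => // /eqP.
Qed.

Lemma eval_flip N (lab : lbl N) q L g X : coarse (upd lab q) L -> g None = false ->
  eval_query q (flipg L g X) = eval_query q X.
Proof.
move=> [h1 h2] gN; have := upd_query lab q.
case: q h1 h2 => [a|a b] h1 h2 /= H; rewrite !ffunE.
  by rewrite (h2 _ H) gN addbF.
by rewrite (h1 _ _ H) addbACA addbb addbF.
Qed.

Lemma flip_inv N (t : xdt N) lab X g : g None = false ->
  let X' := flipg (labf t lab X) g X in
  output t X' = output t X /\ labf t lab X' = labf t lab X /\ nqueries t X' = nqueries t X.
Proof.
move=> gN; elim: t lab => [o|q t0 IH0 t1 IH1] lab //=.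
have ce : eval_query q (flipg (labf (if eval_query q X then t1 else t0) (upd lab q) X) g X)
     = eval_query q X.
  apply: eval_flip gN; case: eval_query; exact: coarse_labf.
rewrite /output /nqueries /= ce.
case: (eval_query q X) => /=.
  by case: (IH1 (upd lab q)); rewrite /output /nqueries => -> [-> ->].
by case: (IH0 (upd lab q)); rewrite /output /nqueries => -> [-> ->].
Qed.

Definition sg (b : bool) : int := if b then 1 else -1.
Definition Sl {N} (L : lbl N) (X : input N) (l : 'I_N) : int :=
  \sum_(u | L u == Some l) sg (X u).
Definition cnt {N} (L : lbl N) (X : input N) : R := \sum_(l < N) ((Sl L X l != 0)%:R).

Lemma Sl_flip N (L : lbl N) g X l :
  Sl L (flipg L g X) l = if g (Some l) then - Sl L X l else Sl L X l.
Proof.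
rewrite /Sl; case: ifP => gl.
  rewrite -sumrN; apply: eq_bigr => u /eqP Lu; rewrite ffunE Lu gl addbT.
  by case: (X u).
by apply: eq_bigr => u /eqP Lu; rewrite ffunE Lu gl addbF.
Qed.

Lemma cnt_ext N (L L' : lbl N) X : (forall u, L' u = L u) -> cnt L' X = cnt L X.
Proof.
by move=> e; apply: eq_bigr => l _; rewrite /Sl; congr (_ != _)%:R; apply: eq_bigl => u; rewrite e.
Qed.

Lemma cnt_kill N (L L' : lbl N) c X : (forall u, L' u = if L u == c then None else L u) ->
  cnt L X <= cnt L' X + 1.
Proof.
move=> e; case: c e => [l0|] e; last first.
  rewrite (@cnt_ext _ L L') ?lerDl // => u; rewrite e; by case: eqP => // ->.
rewrite /cnt (bigD1 l0) //= [X in _ <= X + _](bigD1 l0) //=.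
have -> : Sl L' X l0 = 0.
  rewrite /Sl big_pred0 // => u; rewrite e; case: ifP => // /negbT h; exact/negbTE.
rewrite eqxx add0r.
have -> : \sum_(i < N | i != l0) ((Sl L' X i != 0)%:R : R) = \sum_(i < N | i != l0) (Sl L X i != 0)%:R.
  apply: eq_bigr => l hl; rewrite /Sl; congr (_ != _)%:R; apply: eq_bigl => u.
  rewrite e; case: ifP => // /eqP ->; apply/esym/eqP => -[] el; move: hl; by rewrite el eqxx.
by rewrite addrC lerD2l; case: (_ != _); rewrite ?ler01.
Qed.
Lemma ind3 (x y : int) :
 ((x != 0)%:R + (y != 0)%:R - (x + y != 0)%:R) + ((x != 0)%:R + (- y != 0)%:R - (x + - y != 0)%:R) <= 3 :> R.
Proof.
rewrite oppr_eq0.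
have key : x != 0 -> x + y = 0 -> x + - y = 0 -> False by move=> /eqP; lia.
case: (x =P 0) => hx; case: (y =P 0) => hy; case: (x + y =P 0) => h1; case: (x + - y =P 0) => h2 /=; try lra.
by case: key => //; apply/eqP.
Qed.

Lemma eqSome N (a b : 'I_N) : (Some a == Some b) = (a == b).
Proof. by []. Qed.

Lemma cnt_merge N (L L' : lbl N) l1 l2 X : l1 != l2 ->
  (forall u, L' u = if L u == Some l2 then Some l1 else L u) ->
  cnt L X + (Sl L X l1 + Sl L X l2 != 0)%:R
  = cnt L' X + (Sl L X l1 != 0)%:R + (Sl L X l2 != 0)%:R.
Proof.
move=> h12 e.
have h21 : l2 != l1 by rewrite eq_sym.
have S1 : Sl L' X l1 = Sl L X l1 + Sl L X l2.
  rewrite /Sl (bigID (fun u => L u == Some l2)) /= addrC; congr (_ + _); apply: eq_bigl => u;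
  rewrite e; case: ifP => [/eqP Lu|/negbT Lu]; rewrite ?Lu ?eqSome ?eqxx ?(negbTE h21) ?andbT ?andbF //.
have S2 : Sl L' X l2 = 0.
  rewrite /Sl big_pred0 // => u; rewrite e; case: ifP => [_|/negbT/negbTE //].
  by rewrite eqSome (negbTE h12).
have S3 : forall l, l != l1 -> l != l2 -> Sl L' X l = Sl L X l.
  move=> l n1 n2; apply: eq_bigl => u; rewrite e; case: ifP => [/eqP Lu|//].
  by rewrite Lu !eqSome eq_sym (negbTE n1) eq_sym (negbTE n2).
rewrite /cnt (bigD1 l1) //= (bigD1 l2 h21) /=.
rewrite [in RHS](bigD1 l1) //= [in RHS](bigD1 l2 h21) /= S1 S2 eqxx add0r.
have -> : \sum_(i < N | (i != l1) && (i != l2)) ((Sl L' X i != 0)%:R : R)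
        = \sum_(i < N | (i != l1) && (i != l2)) (Sl L X i != 0)%:R.
  by apply: eq_bigr => l /andP [n1 n2]; rewrite S3.
set r := \sum_(i < N | _) _.
lra.
Qed.

Lemma sum_inv N (A : {set input N}) (s : input N -> input N) (F : input N -> R) :
  involutive s -> (forall X, X \in A -> s X \in A) ->
  \sum_(X in A) F X = \sum_(X in A) F (s X).
Proof.
move=> si sA; rewrite (reindex_inj (inv_inj si)); apply: eq_bigl => X.
apply/idP/idP => [/sA|/sA //]; by rewrite si.
Qed.

Lemma flipg_inv N (L : lbl N) g : involutive (flipg L g).
Proof. by move=> X; apply/ffunP => u; rewrite !ffunE -addbA addbb addbF. Qed.

Definition closed {N} (lab : lbl N) (A : {set input N}) :=
  forall g X, g None = false -> X \in A -> flipg lab g X \in A.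

Lemma drop_point N (lab L' : lbl N) (A : {set input N}) :
  (forall X, cnt lab X <= cnt L' X + 1) ->
  \sum_(X in A) (2/3 * cnt lab X) <= \sum_(X in A) (2/3 * cnt L' X + 1).
Proof. move=> h; apply: ler_sum => X _; have := h X; lra. Qed.

Lemma drop_merge N (L L' : lbl N) l1 l2 (A : {set input N}) : l1 != l2 ->
  (forall u, L' u = if L u == Some l2 then Some l1 else L u) -> closed L A ->
  \sum_(X in A) (2/3 * cnt L X) <= \sum_(X in A) (2/3 * cnt L' X + 1).
Proof.
move=> h12 e cA.
pose s := flipg L (fun o => o == Some l2).
pose d X := cnt L X - cnt L' X.
have dE X : d X = (Sl L X l1 != 0)%:R + (Sl L X l2 != 0)%:R - (Sl L X l1 + Sl L X l2 != 0)%:R.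
  rewrite /d; have := cnt_merge X h12 e; lra.
have ds X : d X + d (s X) <= 3.
  rewrite !dE !Sl_flip /= eqSome (negbTE h12) eqxx; exact: ind3.
have sA X : X \in A -> s X \in A by apply: cA.
have H1 : \sum_(X in A) d X = \sum_(X in A) d (s X) := sum_inv _ (flipg_inv _ _) sA.
have H2 : \sum_(X in A) (d X + d (s X)) <= \sum_(X in A) 3 by apply: ler_sum.
rewrite big_split /= -H1 sumr_const in H2.
rewrite -subr_ge0 -sumrB.
have -> : \sum_(X in A) (2 / 3 * cnt L' X + 1 - 2 / 3 * cnt L X) = \sum_(X in A) (1 - 2/3 * d X).
  by apply: eq_bigr => X _; rewrite /d; lra.
rewrite sumrB sumr_const -mulr_sumr -mulr_natr.
move: H2; rewrite -mulr_natr; set n := (#|A|%:R : R); set x := \sum_(_ in _) _; lra.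
Qed.

Lemma drop N (lab : lbl N) q (A : {set input N}) : closed lab A ->
  \sum_(X in A) (2/3 * cnt lab X) <= \sum_(X in A) (2/3 * cnt (upd lab q) X + 1).
Proof.
move=> cA; case: q => [a|a b].
  by apply: drop_point => X; apply: (cnt_kill (c := lab a)).
case hb: (lab b) => [l2|].
  case ha: (lab a) => [l1|].
    case: (l1 =P l2) => [e12|n12].
      apply: drop_point => X; rewrite (@cnt_ext _ lab) ?lerDl // => u.
      rewrite /upd /= hb /=; case: ifP => // /eqP ->; by rewrite ha e12.
    apply: (drop_merge (l1 := l1) (l2 := l2)) => //; first exact/eqP.
    by move=> u; rewrite /upd /= hb /= ha.
  apply: drop_point => X; apply: (cnt_kill (c := Some l2)) => u.
  by rewrite /upd /= hb /= ha.
apply: drop_point => X; apply: (cnt_kill (c := lab a)) => u.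
by rewrite /upd /= hb /=.
Qed.

Lemma closed_upd N (lab : lbl N) q (A : {set input N}) b : closed lab A ->
  closed (upd lab q) [set X in A | eval_query q X == b].
Proof.
move=> cA g X gN; rewrite !inE => /andP [XA /eqP qX].
rewrite (@eval_flip _ lab q (upd lab q) g X (coarse_refl _) gN) qX eqxx andbT.
have -> : flipg (upd lab q) g X = flipg lab (fun o => g (hq lab q o)) X by [].
by apply: cA => //; rewrite hq_None.
Qed.

Lemma pot N (t : xdt N) (lab : lbl N) (A : {set input N}) : closed lab A ->
  \sum_(X in A) (2/3 * cnt lab X) <=
  \sum_(X in A) (2/3 * cnt (labf t lab X) X + (nqueries t X)%:R).
Proof.
elim: t lab A => [o|q t0 IH0 t1 IH1] lab A cA.
  by apply: ler_sum => X _; rewrite /nqueries /= addr0.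
apply: le_trans (drop q cA) _.
have E : forall X, 2 / 3 * cnt (labf (Node q t0 t1) lab X) X + (nqueries (Node q t0 t1) X)%:R
   = (2/3 * cnt (labf (if eval_query q X then t1 else t0) (upd lab q) X) X
      + (nqueries (if eval_query q X then t1 else t0) X)%:R) + 1.
  by move=> X; rewrite /nqueries /= -addrA natr1.
under [X in _ <= X]eq_bigr => X _ do rewrite E.
rewrite big_split [X in _ <= X]big_split /= lerD2r.
have E2 : forall (b : bool) (F : input N -> R),
  \sum_(X in [set X in A | eval_query q X == b]) F X = \sum_(X in A | eval_query q X == b) F X.
  by move=> b F; apply: eq_bigl => X; rewrite inE.
rewrite (bigID (fun X => eval_query q X == true)) /=.
rewrite [X in _ <= X](bigID (fun X => eval_query q X == true)) /=.
apply: lerD.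
  have := IH1 (upd lab q) _ (@closed_upd _ lab q A true cA); rewrite !E2 => h.
  apply: le_trans h _; apply: ler_sum => X /andP [_ /eqP ->]; exact: lexx.
have := IH0 (upd lab q) _ (@closed_upd _ lab q A false cA); rewrite !E2 => h.
have E3 : forall F : input N -> R, \sum_(X in A | eval_query q X == false) F X
   = \sum_(X in A | ~~ (eval_query q X == true)) F X.
  by move=> F; apply: eq_bigl => X; case: eval_query.
rewrite -!E3; apply: le_trans h _; apply: ler_sum => X /andP [_ /eqP ->]; exact: lexx.
Qed.

Definition Tot {N} (X : input N) : int := \sum_(u < N) sg (X u).
Definition Rn {N} (L : lbl N) (X : input N) : int := \sum_(u | L u == None) sg (X u).

Lemma Tot_dec N (L : lbl N) X : Tot X = Rn L X + \sum_(l < N) Sl L X l.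
Proof.
rewrite /Tot (bigID (fun u => L u == None)) /=; congr (_ + _).
pose p u := if L u is Some l then l else u.
rewrite (partition_big p predT) //; apply: eq_bigr => l _; apply: eq_bigl => u.
rewrite /p; case: (L u) => [l'|] //=.
Qed.

Lemma Rn_flip N (L : lbl N) g X : g None = false -> Rn L (flipg L g X) = Rn L X.
Proof. by move=> gN; apply: eq_bigr => u /eqP Lu; rewrite ffunE Lu gN addbF. Qed.

Lemma Tot_flip N (L : lbl N) g X : g None = false ->
  Tot (flipg L g X) = Rn L X + \sum_(l < N) (if g (Some l) then - Sl L X l else Sl L X l).
Proof.
by move=> gN; rewrite (Tot_dec L) Rn_flip //; congr (_ + _); apply: eq_bigr => l _; rewrite Sl_flip.
Qed.

Lemma card_sg N (X : input N) :
  Tot X = (#|[set i | X i]|)%:Z - (#|[set i | ~~ X i]|)%:Z.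
Proof.
rewrite /Tot (bigID (fun u => X u)) /=.
rewrite (eq_bigr (fun _ => 1)); last by move=> u ->.
rewrite [X in _ + X](eq_bigr (fun _ => -1)); last by move=> u /negbTE ->.
rewrite sumrN !sumr_const; congr (_ - _); rewrite natz; congr Posz;
  by apply: eq_card => u; rewrite inE.
Qed.

Lemma maj_Tot N (X : input N) : majority X = (0 <= Tot X).
Proof.
rewrite /majority card_sg subr_ge0 lez_nat -leqNgt.
by [].
Qed.

Definition lab0 {N} : lbl N := fun u => Some u.
Definition zero_err {N} (t : xdt N) :=
  forall X, output t X = Some (majority X) \/ output t X = None.
Definition star {N} (t : xdt N) X := flipg (labf t lab0 X) (fun o => o != None) X.

Lemma cnt_le_D N (L : lbl N) X : cnt L X <= (\sum_(l < N) `|Sl L X l|)%:~R.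
Proof.
rewrite /cnt (big_morph (fun x : int => x%:~R : R) (fun x y => @intrD R x y) (mulr0z 1)).
apply: ler_sum => l _; case: eqP => [->|/eqP h]; first by rewrite normr0.
rewrite ler1z; lia.
Qed.

Lemma leaf_bound N (t : xdt N) X : zero_err t -> output t X = Some (majority X) ->
  cnt (labf t lab0 X) X <= ((`|Tot X| + `|Tot (star t X)|)%:~R) / 2.
Proof.
move=> ze oX; set L := labf t lab0 X.
set D := \sum_(l < N) `|Sl L X l|.
have mflip : forall g, g None = false -> majority (flipg L g X) = majority X.
  move=> g gN; have [h _] := flip_inv t lab0 X gN.
  case: (ze (flipg L g X)); rewrite -/L h oX; [by case=> -> | by []].
pose gm (o : option 'I_N) := if o is Some l then 0 < Sl L X l else false.
pose gp (o : option 'I_N) := if o is Some l then Sl L X l < 0 else false.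
have Tm : Tot (flipg L gm X) = Rn L X - D.
  rewrite Tot_flip // /D -sumrN; congr (_ + _); apply: eq_bigr => l _ /=.
  case: ifP => h; [rewrite gtr0_norm // | rewrite ler0_norm ?opprK //]; lia.
have Tp : Tot (flipg L gp X) = Rn L X + D.
  rewrite Tot_flip // /D; congr (_ + _); apply: eq_bigr => l _ /=.
  case: ifP => h; [rewrite ltr0_norm // | rewrite ger0_norm //]; lia.
have Ts : Tot (star t X) = Rn L X - \sum_(l < N) Sl L X l.
  rewrite /star -/L Tot_flip // -sumrN; congr (_ + _); by apply: eq_bigr.
have T0 : Tot X = Rn L X + \sum_(l < N) Sl L X l by rewrite (Tot_dec L).
have DR : D <= `|Rn L X|.
  have := mflip gm erefl; have := mflip gp erefl.
  rewrite !maj_Tot Tm Tp => hp hm; case: (lerP 0 (Tot X)) => h.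
    by move: hm; rewrite h => /idP; lia.
  by move: hp; rewrite (leNgt 0 (Tot X)) h /= => /negbT; rewrite -ltNge; lia.
have H : (2 * D)%:~R <= (`|Tot X| + `|Tot (star t X)|)%:~R :> R.
  rewrite ler_int Ts T0; lia.
apply: le_trans (cnt_le_D L X) _; move: H; rewrite intrM; set a := (_ %:~R); set b := (_ %:~R).
have -> : a = 2 by []. set c := (_ %:~R); lra.
Qed.

Lemma star_inv N (t : xdt N) : involutive (star t).
Proof.
move=> X; rewrite /star; have [_ [-> _]] := flip_inv t lab0 X (g := fun o => o != None) erefl.
exact: flipg_inv.
Qed.

Definition fl1 {N} (u : 'I_N) (X : input N) : input N := [ffun w => X w (+) (w == u)].

Lemma fl1_inv N (u : 'I_N) : involutive (fl1 u).
Proof. by move=> X; apply/ffunP => w; rewrite !ffunE -addbA addbb addbF. Qed.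

Lemma sgN b : (sg (~~ b))%:~R = - (sg b)%:~R :> R.
Proof. by case: b; rewrite /= ?mulrN1z ?mulr1z ?opprK. Qed.

Lemma var N : \sum_(X : input N) ((Tot X)%:~R ^+ 2 : R) = N%:R * #|{: input N}|%:R.
Proof.
pose a (X : input N) u : R := (sg (X u))%:~R.
have TE X : (Tot X)%:~R = \sum_(u < N) a X u.
  by rewrite /Tot (big_morph (fun x : int => x%:~R : R) (fun x y => @intrD R x y) (mulr0z 1)).
have sq X : (Tot X)%:~R ^+ 2 = \sum_(u < N) \sum_(v < N) a X u * a X v.
  by rewrite TE expr2 mulr_suml; apply: eq_bigr => u _; rewrite mulr_sumr.
rewrite (eq_bigr _ (fun X _ => sq X)) exchange_big /=.
have off : forall u v, u != v -> \sum_(X : input N) a X u * a X v = 0.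
  move=> u v uv.
  have e : \sum_(X : input N) a X u * a X v = \sum_(X : input N) a (fl1 u X) u * a (fl1 u X) v.
    by rewrite (reindex_inj (inv_inj (fl1_inv u))).
  have e2 : forall X, a (fl1 u X) u * a (fl1 u X) v = - (a X u * a X v).
    move=> X; rewrite /a !ffunE eqxx addbT eq_sym (negbTE uv) addbF sgN.
    by rewrite mulNr.
  rewrite (eq_bigr _ (fun X _ => e2 X)) sumrN in e.
  set s := \sum_(X : input N) _ in e *; lra.
rewrite (eq_bigr (fun _ => #|{: input N}|%:R)).
  by rewrite sumr_const card_ord mulr_natl.
move=> u _; rewrite exchange_big (bigD1 u) //= [X in _ + X]big1 ?addr0.
  rewrite (eq_bigr (fun _ => 1)) ?sumr_const //.
  by move=> X _; rewrite /a; case: (X u); rewrite /= ?mulrN1z ?mulr1z ?mulrNN mulr1.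
by move=> v vu; apply: off; rewrite eq_sym.
Qed.


Lemma abs_bound (N : nat) : leq 1 N ->
  \sum_(X : input N) `|(Tot X)%:~R : R| <= #|{: input N}|%:R * Num.sqrt N%:R.
Proof.
move=> N1; set M : R := #|{: input N}|%:R; set r := Num.sqrt (N%:R : R).
have r0 : 0 < r by rewrite sqrtr_gt0 ltr0n.
have rr : r ^+ 2 = N%:R by rewrite sqr_sqrtr // ler0n.
have pt (x : R) : `|x| * r <= (x ^+ 2 + N%:R) / 2.
  have h : 0 <= (`|x| - r) ^+ 2 by rewrite sqr_ge0.
  have hx : `|x| ^+ 2 = x ^+ 2 by rewrite real_normK ?num_real.
  move: h; rewrite sqrrB hx rr; lra.
have S1 : (\sum_(X : input N) `|(Tot X)%:~R : R|) * r <= \sum_(X : input N) (((Tot X)%:~R ^+ 2 + N%:R) / 2).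
  by rewrite mulr_suml; apply: ler_sum => X _; apply: pt.
rewrite -mulr_suml big_split /= var sumr_const -/M in S1.
rewrite -(ler_pM2r r0); apply: le_trans S1 _.
rewrite -mulr_natr -/M -rr expr2; lra.
Qed.

Lemma cnt_lab0 N (X : input N) : cnt lab0 X = N%:R.
Proof.
rewrite /cnt (eq_bigr (fun _ => 1)) ?sumr_const ?card_ord // => l _.
rewrite /Sl (eq_bigl (fun u => u == l)); last by move=> u; rewrite eqSome.
by rewrite big_pred1_eq; case: (X l).
Qed.

Lemma cnt_leN N (L : lbl N) X : cnt L X <= N%:R.
Proof.
rewrite /cnt -[N in N%:R]card_ord -sumr_const; apply: ler_sum => l _.
by case: (_ != _); rewrite ?ler01.
Qed.

Lemma tree_ineq N (t : xdt N) (k : nat) : zero_err t -> (forall X, leq (nqueries t X) k) ->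
  2/3 * N%:R * #|{: input N}|%:R <= k%:R * #|{: input N}|%:R
    + 2/3 * N%:R * (#|{: input N}|%:R - \sum_(X : input N) (output t X == Some (majority X))%:R)
    + 2/3 * \sum_(X : input N) `|(Tot X)%:~R : R|.
Proof.
move=> ze hk.
have cT : closed (@lab0 N) [set: input N] by move=> g X _ _; rewrite inE.
have P := pot t cT.
have E : forall F : input N -> R, \sum_(X in [set: input N]) F X = \sum_(X : input N) F X.
  by move=> F; apply: eq_bigl => X; rewrite inE.
rewrite !E in P.
have e0 : forall X : input N, 2/3 * cnt lab0 X = 2/3 * N%:R :> R by move=> X; rewrite cnt_lab0.
rewrite (eq_bigr _ (fun X _ => e0 X)) in P.
rewrite sumr_const -[(2/3 * N%:R) *+ _]mulr_natr in P.
apply: le_trans P _.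
pose B (X : input N) : R := (`|(Tot X)%:~R : R| + `|(Tot (star t X))%:~R : R|) / 2.
have pt : forall X, 2/3 * cnt (labf t lab0 X) X + (nqueries t X)%:R <=
   k%:R + 2/3 * N%:R * (1 - (output t X == Some (majority X))%:R) + 2/3 * B X.
  move=> X; have hkX : (nqueries t X)%:R <= k%:R :> R by rewrite ler_nat.
  have B0 : 0 <= B X by rewrite /B; apply: divr_ge0 => //; apply: addr_ge0.
  case: eqP => [o|_].
    have := leaf_bound ze o; rewrite intrD !intr_norm -/(B X) => h.
    rewrite subrr mulr0 addr0; lra.
  have := cnt_leN (labf t lab0 X) X; rewrite subr0 mulr1; lra.
apply: le_trans (ler_sum _ (fun X _ => pt X)) _.
rewrite !big_split /= sumr_const -mulr_natr -!mulr_sumr sumrB sumr_const -mulr_natr mul1r.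
have -> : \sum_(X : input N) B X = \sum_(X : input N) `|(Tot X)%:~R : R|.
  rewrite /B -mulr_suml big_split /=.
  rewrite [X in _ + X](reindex_inj (inv_inj (star_inv t))) /=.
  rewrite [X in _ + X](eq_bigr (fun X => `|(Tot X)%:~R : R|)) /=; last by move=> X _; rewrite star_inv.
  set s := \sum_(X : input N) _; lra.
lra.
Qed.

Lemma sum_seq_le (T : Type) (D : seq T) (F G : T -> R) :
  List.Forall (fun p => F p <= G p) D -> \sum_(p <- D) F p <= \sum_(p <- D) G p.
Proof.
elim: D => [|x D IH] h; first by rewrite !big_nil.
inversion h; subst; rewrite !big_cons; apply: lerD => //; exact: IH.
Qed.

Lemma le_max_seq (T : Type) (D : seq T) (P : pred T) (F : T -> nat) p :
  List.In p D -> P p -> leq (F p) (\max_(q <- D | P q) F q).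
Proof.
elim: D => [//|x D IH] /= [<-|hin] hp; rewrite big_cons.
  by rewrite hp leq_maxl.
case: ifP => _; last exact: IH.
by apply: leq_trans (IH hin hp) _; rewrite leq_maxr.
Qed.

Theorem mainTheorem14 :
  exists c : R, forall (N : nat), leq 1 N ->
  forall eps : R, 0 <= eps <= 1 ->
  forall D : seq (xdt N * R), is_distribution D ->
  zero_sided (@majority N) D eps ->
  2 / 3 * N%:R - eps * N%:R - c * Num.sqrt (N%:R) <= (rcost D)%:R.
Proof.
exists 1 => N N1 eps /andP [e0 e1] D [Dpos Dsum] zs.
set k := rcost D.
set M : R := #|{: input N}|%:R.
set S := \sum_(X : input N) `|(Tot X)%:~R : R|.
pose C (t : xdt N) := \sum_(X : input N) ((output t X == Some (majority X))%:R : R).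
have M0 : 0 < M by rewrite ltr0n; apply/card_gt0P; exists [ffun => true].
have key : List.Forall (fun p : xdt N * R =>
     p.2 * (2/3 * N%:R * M) <= p.2 * (k%:R * M + 2/3 * N%:R * (M - C p.1) + 2/3 * S)) D.
  apply/List.Forall_forall => p hin.
  have w0 : 0 <= p.2 := proj1 (List.Forall_forall _ _) Dpos p hin.
  case: (eqVneq p.2 0) => [->|wn]; first by rewrite !mul0r.
  have wp : 0 < p.2 by rewrite lt0r wn.
  apply: ler_wpM2l => //; apply: tree_ineq.
    move=> X; exact: (proj1 (List.Forall_forall _ _) (zs X).1 p hin wp).
  move=> X; apply: leq_trans (_ : leq _ (\max_(q <- D | posw q.2) nqueries q.1 X)) _.
    exact: (@le_max_seq _ D (fun q : xdt N * R => posw q.2) (fun q => nqueries q.1 X) p hin wp).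
  exact: (@leq_bigmax _ (fun X => \max_(q <- D | posw q.2) nqueries q.1 X) X).
have H := sum_seq_le key.
rewrite -mulr_suml Dsum mul1r in H.
have E : \sum_(p <- D) p.2 * (k%:R * M + 2/3 * N%:R * (M - C p.1) + 2/3 * S)
   = (k%:R * M + 2/3 * N%:R * M + 2/3 * S) - 2/3 * N%:R * \sum_(p <- D) p.2 * C p.1.
  rewrite (eq_bigr (fun p => p.2 * (k%:R * M + 2/3 * N%:R * M + 2/3 * S) - 2/3 * N%:R * (p.2 * C p.1))).
    by rewrite sumrB -mulr_suml Dsum mul1r -mulr_sumr.
  move=> p _; ring.
rewrite E in H.
have CC : (1 - eps) * M <= \sum_(p <- D) p.2 * C p.1.
  rewrite /C (eq_bigr (fun p => \sum_(X : input N) p.2 * (output p.1 X == Some (majority X))%:R));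
    last by move=> p _; rewrite mulr_sumr.
  rewrite exchange_big /=.
  have -> : (1 - eps) * M = \sum_(X : input N) (1 - eps) by rewrite sumr_const /M mulr_natr.
  apply: ler_sum => X _; apply: le_trans (zs X).2 _.
  rewrite big_mkcond /=; apply: ler_sum => p _; case: eqP => _; by rewrite ?mulr1 ?mulr0.
have SB := abs_bound N1; rewrite -/S -/M in SB.
set r := Num.sqrt (N%:R : R) in SB *.
set n := (N%:R : R) in H E CC *.
have n0 : 0 <= n by rewrite /n ler0n.
have r0 : 0 <= r by rewrite /r sqrtr_ge0.
have k0 : 0 <= (k%:R : R) by rewrite ler0n.
set w := \sum_(p <- D) _ in H CC.
have X1 : 0 <= k%:R * M + 2/3 * S - 2/3 * n * w.
  move: H; set a := 2/3 * n * M; lra.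
have X2 : 0 <= 2/3 * n * (w - (1 - eps) * M).
  apply: mulr_ge0; [apply: mulr_ge0 => //; lra | lra].
have X3 : 0 <= 2/3 * (M * r - S) by apply: mulr_ge0; lra.
have H2 : 0 <= M * (k%:R + 2/3 * (n * eps) + 2/3 * r - 2/3 * n).
  have -> : M * (k%:R + 2/3 * (n * eps) + 2/3 * r - 2/3 * n)
     = (k%:R * M + 2/3 * S - 2/3 * n * w) + 2/3 * n * (w - (1 - eps) * M) + 2/3 * (M * r - S)
    by ring.
  by apply: addr_ge0; [apply: addr_ge0|].
rewrite pmulr_rge0 // in H2.
have ne : 0 <= n * eps by apply: mulr_ge0.
rewrite (mulrC eps n) mul1r.
set z := n * eps in H2 ne *; lra.
Qed.
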